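(* Fix an algorithm $\mathscr{A}$ run for $T$ rounds on a two-stage causal MDP instance, and an intermediate state $i$ with $m_i\ge1$. Let $Tr_i$ be the expected number of visits to state $i$, let $N_{(a,i)}$ be the expected number of times $\mathscr{A}$ explicitly performs $a$ at state $i$, let $\mathcal{J}_i=\{a\in\mathcal{I}_{m_i}:N_{(a,i)}\le 2Tr_i/m_i\}$, and let $T_{(a,i)}$ be the (random) number of rounds in which intervention $a$ is observed at state $i$. Then for every $a\in\mathcal{J}_i$, $$\mathbb{E}[T_{(a,i)}]\le\frac{3Tr_i}{m_i}.$$
   Context: Two-stage causal MDP: start state $0$, intermediate states $[k]$; at each state $i$ there are independent Bernoulli variables $X^i_1,\dots,X^i_n$ with $q^i_j=\mathbb{P}\{X^i_j=1\}$, drawn afresh each round independently of which state is visited; atomic interventions $\mathcal{I}_i=\{do()\}\cup\{do(X^i_j=0),do(X^i_j=1):j\in[n]\}$, where $do(X^i_j=x)$ sets $X^i_j=x$ and leaves the other variables random. In each of $T$ rounds the algorithm performs an intervention at state $0$, transitions randomly to some intermediate state $i$, and performs one intervention in $\mathcal{I}_i$, observing all $X^i_j$. Intervention $a=do(X^i_j=1)$ is said to be observed at state $i$ in a round if state $i$ is visited and $X^i_j=1$ in that round (whether because $a$ was performed or because the variable took that value naturally). Sorting $q^i_{(1)}\le\dots\le q^i_{(n)}$, $m_i=\max\{j:q^i_{(j)}<1/j\}$ and $\mathcal{I}_{m_i}=\{do(X^i_{(j)}=1):q^i_{(j)}<1/j\}$. Expectations are over the randomness of the instance and the algorithm. *)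

(* Defs.v *)
From HB Require Import structures.
From mathcomp Require Import all_boot all_order all_algebra all_fingroup.
Set Implicit Arguments. Unset Strict Implicit. Unset Printing Implicit Defensive.
Import Order.TTheory GRing.Theory Num.Theory.
Local Open Scope ring_scope.

(* Atomic interventions at an intermediate state:
   None = do(),  Some (j, x) = do(X_j = x). *)
Notation interv n := (option ('I_n * bool)).

(* One round: (intervention at state 0, observation at state 0,
   intermediate state visited, intervention there, observed values X^i). *)
Notation rec A0 O0 k n :=
  (A0 * O0 * 'I_k * interv n * {ffun 'I_n -> bool})%type.

Section Model.
Variables (R : realFieldType) (A0 O0 : finType) (k n : nat).

Definition rec_a0 (r : rec A0 O0 k n) : A0 := r.1.1.1.1.
Definition rec_o0 (r : rec A0 O0 k n) : O0 := r.1.1.1.2.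
Definition rec_st (r : rec A0 O0 k n) : 'I_k := r.1.1.2.
Definition rec_act (r : rec A0 O0 k n) : interv n := r.1.2.
Definition rec_X (r : rec A0 O0 k n) : {ffun 'I_n -> bool} := r.2.

Definition bp (p : R) (b : bool) : R := if b then p else 1 - p.

Definition var_factor (qi : 'I_n -> R) (a : interv n) (X : {ffun 'I_n -> bool})
  (j : 'I_n) : R :=
  match a with
  | Some (j', x) => if j' == j then (X j == x)%:R else bp (qi j) (X j)
  | None => bp (qi j) (X j)
  end.

Definition bern (qi : 'I_n -> R) (a : interv n) (X : {ffun 'I_n -> bool}) : R :=
  \prod_(j < n) var_factor qi a X j.

Definition valid_q (q : 'I_k -> 'I_n -> R) : Prop :=
  forall i j, 0 <= q i j <= 1.

(* trans a0 o0 i = joint probability of observation o0 at state 0 and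
   transition to intermediate state i, when a0 is performed at state 0 *)
Definition valid_trans (trans : A0 -> O0 -> 'I_k -> R) : Prop :=
  forall a0, (forall o0 i, 0 <= trans a0 o0 i) /\
             \sum_(p : O0 * 'I_k) trans a0 p.1 p.2 = 1.

Definition valid_pol0 (pol0 : seq (rec A0 O0 k n) -> A0 -> R) : Prop :=
  forall h, (forall a0, 0 <= pol0 h a0) /\ \sum_(a0 : A0) pol0 h a0 = 1.

Definition valid_pol1
  (pol1 : seq (rec A0 O0 k n) -> A0 -> O0 -> 'I_k -> interv n -> R) : Prop :=
  forall h a0 o0 i, (forall a, 0 <= pol1 h a0 o0 i a) /\
                    \sum_(a : interv n) pol1 h a0 o0 i a = 1.

Variable T : nat.

Definition traj_weight (pol0 : seq (rec A0 O0 k n) -> A0 -> R)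
  (trans : A0 -> O0 -> 'I_k -> R)
  (pol1 : seq (rec A0 O0 k n) -> A0 -> O0 -> 'I_k -> interv n -> R)
  (q : 'I_k -> 'I_n -> R) (tr : T.-tuple (rec A0 O0 k n)) : R :=
  \prod_(t < T)
    (pol0 (take t tr) (rec_a0 (tnth tr t)) *
     trans (rec_a0 (tnth tr t)) (rec_o0 (tnth tr t)) (rec_st (tnth tr t)) *
     pol1 (take t tr) (rec_a0 (tnth tr t)) (rec_o0 (tnth tr t))
          (rec_st (tnth tr t)) (rec_act (tnth tr t)) *
     bern (q (rec_st (tnth tr t))) (rec_act (tnth tr t)) (rec_X (tnth tr t))).

Definition expect pol0 trans pol1 q (f : T.-tuple (rec A0 O0 k n) -> nat) : R :=
  \sum_(tr : T.-tuple (rec A0 O0 k n))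
     traj_weight pol0 trans pol1 q tr * (f tr)%:R.

Definition visits (i : 'I_k) (tr : T.-tuple (rec A0 O0 k n)) : nat :=
  count (fun r => rec_st r == i) tr.

Definition performs (i : 'I_k) (a : interv n) (tr : T.-tuple (rec A0 O0 k n)) : nat :=
  count (fun r => (rec_st r == i) && (rec_act r == a)) tr.

(* number of rounds in which do(X^i_j = 1) is observed at state i *)
Definition observed1 (i : 'I_k) (j : 'I_n) (tr : T.-tuple (rec A0 O0 k n)) : nat :=
  count (fun r => (rec_st r == i) && rec_X r j) tr.

End Model.

Section Sorting.
Variables (R : realFieldType) (n : nat).

(* s sorts qi increasingly: q_(j+1) = qi (s j)  (0-indexed position j) *)
Definition sorted_by (qi : 'I_n -> R) (s : {perm 'I_n}) : Prop :=
  forall j1 j2 : 'I_n, (j1 <= j2)%N -> qi (s j1) <= qi (s j2).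

(* m_i = max { j : q_(j) < 1/j } (1-indexed; 0 if empty) *)
Definition m_of (qi : 'I_n -> R) (s : {perm 'I_n}) : nat :=
  \max_(j < n | qi (s j) < (j.+1%:R)^-1) j.+1.

Definition in_Im (qi : 'I_n -> R) (s : {perm 'I_n}) (a : interv n) : Prop :=
  exists j : 'I_n, a = Some (s j, true) /\ qi (s j) < (j.+1%:R)^-1.

End Sorting.

Arguments expect {R A0 O0 k n} T pol0 trans pol1 q f.

(* Main.v *)
Require Import Defs.
From HB Require Import structures.
From mathcomp Require Import all_boot all_order all_algebra all_fingroup.
From mathcomp Require Import ring lra.
Import Order.TTheory GRing.Theory Num.Theory.
Local Open Scope ring_scope.
Set Implicit Arguments. Unset Strict Implicit.

Definition vf (R : realFieldType) n (qi : 'I_n -> R) (a : interv n) (j : 'I_n) (b : bool) : R :=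
  match a with
  | Some (j', x) => if j' == j then (b == x)%:R else bp (qi j) b
  | None => bp (qi j) b
  end.

Lemma vf_ge0 (R : realFieldType) n (qi : 'I_n -> R) a j b :
  (forall j, 0 <= qi j <= 1) -> 0 <= vf qi a j b.
Proof.
move=> hq; have /andP[h0 h1] := hq j.
rewrite /vf /bp; case: a => [[j' x]|]; [case: (j' == j)|]; case: b => //;
  rewrite ?ler0n ?subr_ge0 //.
Qed.

Lemma vf_sum (R : realFieldType) n (qi : 'I_n -> R) a j :
  vf qi a j true + vf qi a j false = 1.
Proof.
rewrite /vf /bp; case: a => [[j' x]|]; [case: (j' == j)|].
- by case: x; rewrite /= ?addr0 ?add0r.
- by rewrite addrC subrK.
- by rewrite addrC subrK.
Qed.

Lemma bern_ge0 (R : realFieldType) n (qi : 'I_n -> R) a X :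
  (forall j, 0 <= qi j <= 1) -> 0 <= bern qi a X.
Proof. by move=> hq; apply: prodr_ge0 => j _; apply: (vf_ge0 a j (X j) hq). Qed.

Lemma sum_ffun_prod (R : realFieldType) n (g : 'I_n -> bool -> R) :
  \sum_(X : {ffun 'I_n -> bool}) \prod_j g j (X j) = \prod_j \sum_b g j b.
Proof. by rewrite bigA_distr_bigA. Qed.

Lemma bern_sum (R : realFieldType) n (qi : 'I_n -> R) a :
  \sum_X bern qi a X = 1.
Proof.
rewrite /bern (sum_ffun_prod (fun j b => vf qi a j b)).
apply: big1 => j _; rewrite big_bool. exact: vf_sum.
Qed.

Lemma bern_sumj (R : realFieldType) n (qi : 'I_n -> R) a j :
  \sum_X bern qi a X * (X j)%:R = vf qi a j true.
Proof.
transitivity (\sum_(X : {ffun 'I_n -> bool})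
   \prod_j' (if j' == j then (X j')%:R * vf qi a j' (X j') else vf qi a j' (X j'))).
  apply: eq_bigr => X _; rewrite /bern (bigD1 j) //= [in RHS](bigD1 j) //= eqxx.
  rewrite mulrC mulrA; congr (_ * _).
  by apply: eq_bigr => j' /negbTE ->.
rewrite (sum_ffun_prod (fun j' b => if j' == j then b%:R * vf qi a j' b else vf qi a j' b)).
rewrite (bigD1 j) //= eqxx big_bool /= mul1r mul0r addr0.
rewrite big1 ?mulr1 // => j' /negbTE ->.
by rewrite big_bool; exact: vf_sum.
Qed.
Lemma sum_pair (R : realFieldType) (A B : finType) (F : A * B -> R) :
  \sum_p F p = \sum_a \sum_b F (a, b).
Proof. by rewrite pair_bigA; apply: eq_bigr => -[]. Qed.

Lemma sum_tuple_cons (R : realFieldType) (X : finType) m (F : m.+1.-tuple X -> R) :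
  \sum_(t : m.+1.-tuple X) F t = \sum_(x : X) \sum_(t : m.-tuple X) F (cons_tuple x t).
Proof.
rewrite pair_bigA /=.
rewrite (reindex (fun p : X * m.-tuple X => cons_tuple p.1 p.2)) //=.
exists (fun t => (thead t, behead_tuple t)) => [[x t] _ | t _] /=.
  by congr (_, _); apply: val_inj.
by apply: val_inj => /=; case: t => [[|x s] //].
Qed.

Definition fac (R : realFieldType) (A0 O0 : finType) k n
  (pol0 : seq (rec A0 O0 k n) -> A0 -> R) (trans : A0 -> O0 -> 'I_k -> R)
  (pol1 : seq (rec A0 O0 k n) -> A0 -> O0 -> 'I_k -> interv n -> R)
  (q : 'I_k -> 'I_n -> R) h (r : rec A0 O0 k n) : R :=
    pol0 h (rec_a0 r) *
     trans (rec_a0 r) (rec_o0 r) (rec_st r) *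
     pol1 h (rec_a0 r) (rec_o0 r) (rec_st r) (rec_act r) *
     bern (q (rec_st r)) (rec_act r) (rec_X r).

Lemma tw_cons (R : realFieldType) (A0 O0 : finType) k n T pol0 trans pol1
  (q : 'I_k -> 'I_n -> R) (r : rec A0 O0 k n) (tr : T.-tuple (rec A0 O0 k n)) :
  @traj_weight R A0 O0 k n T.+1 pol0 trans pol1 q (cons_tuple r tr) =
  fac pol0 trans pol1 q [::] r *
  @traj_weight R A0 O0 k n T (fun h => pol0 (r :: h)) trans (fun h => pol1 (r :: h)) q tr.
Proof.
rewrite /traj_weight big_ord_recl tnth0 /=; congr (_ * _).
apply: eq_bigr => t _; by rewrite tnthS add0n.
Qed.

Lemma sum_rec (R : realFieldType) (A0 O0 : finType) k n (F : rec A0 O0 k n -> R) :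
  \sum_r F r = \sum_a0 \sum_o0 \sum_i \sum_a \sum_X F ((((a0, o0), i), a), X).
Proof.
rewrite (sum_pair F) (sum_pair (fun u => \sum_X F (u, X))).
rewrite (sum_pair (fun u => \sum_a \sum_X F ((u, a), X))).
rewrite (sum_pair (fun u => \sum_i \sum_a \sum_X F (((u, i), a), X))).
done.
Qed.

Lemma fac_ge0 (R : realFieldType) (A0 O0 : finType) k n pol0 trans pol1
  (q : 'I_k -> 'I_n -> R) h (r : rec A0 O0 k n) :
  valid_q q -> valid_trans trans -> valid_pol0 pol0 -> valid_pol1 pol1 ->
  0 <= fac pol0 trans pol1 q h r.
Proof.
move=> hq ht hp0 hp1; rewrite /fac.
apply: mulr_ge0; last by apply: bern_ge0 => j; apply: hq.
apply: mulr_ge0; last by apply: (proj1 (hp1 _ _ _ _)).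
apply: mulr_ge0; first by apply: (proj1 (hp0 _)).
by apply: (proj1 (ht _)).
Qed.

Lemma fac_sum (R : realFieldType) (A0 O0 : finType) k n pol0 trans pol1
  (q : 'I_k -> 'I_n -> R) (h : seq (rec A0 O0 k n)) :
  valid_trans trans -> valid_pol0 pol0 -> valid_pol1 pol1 ->
  \sum_r fac pol0 trans pol1 q h r = 1.
Proof.
move=> ht hp0 hp1; rewrite sum_rec -(proj2 (hp0 h)).
apply: eq_bigr => a0 _.
transitivity (\sum_o0 \sum_i pol0 h a0 * trans a0 o0 i).
  apply: eq_bigr => o0 _; apply: eq_bigr => i _.
  rewrite -[RHS]mulr1 -(proj2 (hp1 h a0 o0 i)) mulr_sumr.
  apply: eq_bigr => a _.
  by rewrite /fac /rec_a0 /rec_o0 /rec_st /rec_act /rec_X /= -mulr_sumr bern_sum mulr1.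
rewrite -[RHS]mulr1 -(proj2 (ht a0)) (sum_pair (fun p : O0 * 'I_k => trans a0 p.1 p.2)) mulr_sumr.
by apply: eq_bigr => o0 _; rewrite mulr_sumr.
Qed.

Lemma tw_ge0 (R : realFieldType) (A0 O0 : finType) k n T pol0 trans pol1
  (q : 'I_k -> 'I_n -> R) (tr : T.-tuple (rec A0 O0 k n)) :
  valid_q q -> valid_trans trans -> valid_pol0 pol0 -> valid_pol1 pol1 ->
  0 <= traj_weight pol0 trans pol1 q tr.
Proof.
by move=> hq ht hp0 hp1; apply: prodr_ge0 => t _; exact: fac_ge0.
Qed.

Lemma tw_sum (R : realFieldType) (A0 O0 : finType) k n (q : 'I_k -> 'I_n -> R) trans :
  valid_trans trans -> forall T pol0 pol1,
  valid_pol0 pol0 -> valid_pol1 pol1 ->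
  \sum_(tr : T.-tuple (rec A0 O0 k n)) traj_weight pol0 trans pol1 q tr = 1.
Proof.
move=> ht; elim=> [|T IH] pol0 pol1 hp0 hp1.
  rewrite (eq_bigr (fun _ => 1)); last by move=> tr _; rewrite /traj_weight big_ord0.
  by rewrite sumr_const card_tuple expn0.
rewrite sum_tuple_cons -(@fac_sum _ _ _ _ _ pol0 trans pol1 q [::] ht hp0 hp1).
apply: eq_bigr => r _.
under eq_bigr do rewrite tw_cons.
by rewrite -mulr_sumr IH ?mulr1.
Qed.
Lemma expect_count (R : realFieldType) (A0 O0 : finType) k n (q : 'I_k -> 'I_n -> R) trans
  T pol0 pol1 (P : pred (rec A0 O0 k n)) :
  valid_trans trans -> valid_pol0 pol0 -> valid_pol1 pol1 ->
  expect T.+1 pol0 trans pol1 q (fun tr => count P tr) =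
  \sum_r fac pol0 trans pol1 q [::] r *
    ((P r)%:R + expect T (fun h => pol0 (r :: h)) trans (fun h => pol1 (r :: h)) q
                  (fun tr => count P tr)).
Proof.
move=> ht hp0 hp1; rewrite /expect sum_tuple_cons; apply: eq_bigr => r _.
have m1 := @tw_sum R A0 O0 k n q trans ht T (fun h => pol0 (r :: h)) (fun h => pol1 (r :: h))
  (fun h => hp0 _) (fun h => hp1 _).
rewrite -[(P r)%:R]mulr1 -[X in _ = _ * (_ * X + _)]m1 mulr_sumr -big_split mulr_sumr.
apply: eq_bigr => tr _ /=; rewrite tw_cons natrD; ring.
Qed.

Lemma expect_ge0 (R : realFieldType) (A0 O0 : finType) k n (q : 'I_k -> 'I_n -> R) trans
  T pol0 pol1 f :
  valid_q q -> valid_trans trans -> valid_pol0 pol0 -> valid_pol1 pol1 ->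
  0 <= @expect R A0 O0 k n T pol0 trans pol1 q f.
Proof.
move=> hq ht hp0 hp1; apply: sumr_ge0 => tr _; apply: mulr_ge0 => //.
exact: tw_ge0.
Qed.

Lemma round_ineq (R : realFieldType) (A0 O0 : finType) k n (q : 'I_k -> 'I_n -> R) trans
  pol0 pol1 (h : seq (rec A0 O0 k n)) (i : 'I_k) (j : 'I_n) :
  valid_q q -> valid_trans trans -> valid_pol0 pol0 -> valid_pol1 pol1 ->
  \sum_r fac pol0 trans pol1 q h r * ((rec_st r == i) && rec_X r j)%:R <=
  \sum_r fac pol0 trans pol1 q h r *
    (((rec_st r == i) && (rec_act r == Some (j, true)))%:R + q i j * (rec_st r == i)%:R).
Proof.
move=> hq ht hp0 hp1.
rewrite !sum_rec; apply: ler_sum => a0 _; apply: ler_sum => o0 _.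
apply: ler_sum => st _; apply: ler_sum => a _.
rewrite /fac /rec_a0 /rec_o0 /rec_st /rec_act /rec_X /=.
set G := pol0 h a0 * trans a0 o0 st * pol1 h a0 o0 st a.
have G0 : 0 <= G.
  apply: mulr_ge0; last by apply: (proj1 (hp1 _ _ _ _)).
  apply: mulr_ge0; first by apply: (proj1 (hp0 _)).
  by apply: (proj1 (ht _)).
clearbody G.
case: (eqVneq st i) => [->|nst]; last first.
  by rewrite !big1 // => X _; rewrite /= ?mulr0n ?mulr0 ?add0r ?mulr0.
under eq_bigr do rewrite /= -mulrA.
under [in X in _ <= X]eq_bigr do rewrite /= mulr1 -mulrA.
rewrite -!mulr_sumr bern_sumj.
rewrite (eq_bigr (fun X => bern (q i) a X * ((a == Some (j, true))%:R + q i j))); last first.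
  by [].
rewrite -mulr_suml bern_sum mul1r.
apply: ler_wpM2l => //.
have /andP[q0 q1] := hq i j.
rewrite /vf /bp; case: a => [[j' x]|] /=; last by rewrite add0r.
case: (eqVneq j' j) => [->|nj] /=.
  case: x; rewrite ?eqxx.
    have -> : (true%:R : R) = 1 by []. lra.
  have c0 : (0:R) <= (Some (j, false) == Some (j, true))%:R by rewrite ler0n.
  have -> : ((true == false)%:R : R) = 0 by []. lra.
have c0 : (0:R) <= ((Some (j', x) == Some (j, true)))%:R by rewrite ler0n.
lra.
Qed.
Lemma expect0 (R : realFieldType) (A0 O0 : finType) k n (q : 'I_k -> 'I_n -> R) trans
  pol0 pol1 (P : pred (rec A0 O0 k n)) :
  expect 0 pol0 trans pol1 q (fun tr => count P tr) = 0.
Proof. by apply: big1 => tr _; rewrite (tuple0 tr) /= mulr0. Qed.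

Lemma main_ineq (R : realFieldType) (A0 O0 : finType) k n (q : 'I_k -> 'I_n -> R) trans
  (i : 'I_k) (j : 'I_n) :
  valid_q q -> valid_trans trans -> forall T pol0 pol1,
  valid_pol0 pol0 -> valid_pol1 pol1 ->
  @expect R A0 O0 k n T pol0 trans pol1 q (fun tr => count (fun r => (rec_st r == i) && rec_X r j) tr)
  <= expect T pol0 trans pol1 q (fun tr => count (fun r => (rec_st r == i) && (rec_act r == Some (j, true))) tr)
     + q i j * expect T pol0 trans pol1 q (fun tr => count (fun r => rec_st r == i) tr).
Proof.
move=> hq ht; elim=> [|T IH] pol0 pol1 hp0 hp1.
  by rewrite !expect0 mulr0 addr0.
rewrite !expect_count //.
set F := fac pol0 trans pol1 q [::].
apply: (@le_trans _ _ (\sum_r F r * (((rec_st r == i) && (rec_act r == Some (j, true)))%:R + q i j * (rec_st r == i)%:R)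
   + \sum_r F r * (expect T (fun h => pol0 (r :: h)) trans (fun h => pol1 (r :: h)) q
        (fun tr => count (fun r => (rec_st r == i) && (rec_act r == Some (j, true))) tr)
     + q i j * expect T (fun h => pol0 (r :: h)) trans (fun h => pol1 (r :: h)) q
        (fun tr => count (fun r => rec_st r == i) tr)))).
  under eq_bigr do rewrite mulrDr.
  rewrite big_split /=; apply: lerD.
    exact: round_ineq.
  apply: ler_sum => r _; apply: ler_wpM2l; first exact: fac_ge0.
  by apply: IH.
rewrite mulr_sumr -!big_split /=; rewrite le_eqVlt; apply/orP; left; apply/eqP/eq_bigr => r _; ring.
Qed.
Lemma m_of_attained (R : realFieldType) n (qi : 'I_n -> R) (s : {perm 'I_n}) :
  (1 <= m_of qi s)%N ->
  exists jm : 'I_n, qi (s jm) < (jm.+1%:R)^-1 /\ m_of qi s = jm.+1.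
Proof.
have : (m_of qi s == 0)%N \/
       exists jm : 'I_n, qi (s jm) < (jm.+1%:R)^-1 /\ m_of qi s = jm.+1.
  rewrite /m_of; apply: (big_ind (fun x => (x == 0)%N \/ exists jm : 'I_n, qi (s jm) < (jm.+1%:R)^-1 /\ x = jm.+1)).
  - by left.
  - move=> x y hx hy; rewrite /maxn; case: ltnP => _; [exact: hy | exact: hx].
  - by move=> jm hjm; right; exists jm.
by case=> [/eqP -> //|].
Qed.

Unset Implicit Arguments.

Theorem proposition2 (R : realFieldType) (A0 O0 : finType) (k n T : nat)
  (q : 'I_k -> 'I_n -> R) (trans : A0 -> O0 -> 'I_k -> R)
  (pol0 : seq (rec A0 O0 k n) -> A0 -> R)
  (pol1 : seq (rec A0 O0 k n) -> A0 -> O0 -> 'I_k -> interv n -> R)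
  (i : 'I_k) (s : {perm 'I_n}) :
  valid_q q -> valid_trans trans -> valid_pol0 pol0 -> valid_pol1 pol1 ->
  sorted_by (q i) s -> (1 <= m_of (q i) s)%N ->
  forall j : 'I_n,
    in_Im (q i) s (Some (j, true)) ->
    expect T pol0 trans pol1 q (performs i (Some (j, true))) <=
      2 * expect T pol0 trans pol1 q (visits i) / (m_of (q i) s)%:R ->
    expect T pol0 trans pol1 q (observed1 i j) <=
      3 * expect T pol0 trans pol1 q (visits i) / (m_of (q i) s)%:R.
Proof.
move=> hq ht hp0 hp1 hsort hm1 j [j0 [[->] hj0]] hperf.
have hm := @main_ineq R A0 O0 k n q trans i (s j0) hq ht T pol0 pol1 hp0 hp1.
have [jm [hjm hmeq]] := m_of_attained hm1.
have hle : (j0.+1 <= m_of (q i) s)%N.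
  rewrite /m_of; exact: (@leq_bigmax_cond _ (fun j => q i (s j) < (j.+1%:R)^-1) (fun j : 'I_n => j.+1) j0 hj0).
have hc : q i (s j0) <= ((m_of (q i) s)%:R)^-1.
  rewrite hmeq; apply: ltW; apply: le_lt_trans hjm.
  by apply: hsort; rewrite -ltnS -hmeq.
set V := expect T pol0 trans pol1 q (visits i).
have V0 : 0 <= V by apply: expect_ge0.
have hmpos : (0:R) < (m_of (q i) s)%:R by rewrite ltr0n.
apply: (le_trans hm).
have : q i (s j0) * V <= V / (m_of (q i) s)%:R.
  by rewrite mulrC; apply: ler_wpM2l.
move: hperf; rewrite -/V.
set E := expect T pol0 trans pol1 q _.
set m := (m_of (q i) s)%:R.
move=> h1 h2.
have -> : 3 * V / m = 2 * V / m + V / m by rewrite -mulrDl; congr (_ / _); ring.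
exact: lerD.
Qed.
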